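(* For $i=1,\dots,6$ let $G_i$ be the simple graph on vertex set $\{1,\dots,7\}$ whose edges are the $5$-cycle edges $12,23,34,45,51$, the edge $67$, and additionally: $G_1$: $61,62,74$; $G_2$: $61,63,72$; $G_3$: $61,63,74$; $G_4$: $61,63,72,74$; $G_5$: $61,72$; $G_6$: $61,73$. Then $H(G_1)=11/3$ and $H(G_2)=H(G_3)=H(G_4)=H(G_5)=H(G_6)=7/2$.
   Context: For an integer $q \ge 2$ let $[q]=\{0,\dots,q-1\}$. For $f=(f_1,\dots,f_n):[q]^n\to[q]^n$, the interaction graph $\mathrm{IG}(f)$ is the digraph on $\{1,\dots,n\}$ with an arc $(u,v)$ iff $f_v$ depends essentially on $x_u$ (there exist $a,b\in[q]^n$ differing only in coordinate $u$ with $f_v(a)\ne f_v(b)$). A simple graph is viewed as the digraph with both arcs for each edge and no loops. The $q$-guessing number is $\mathrm{gn}(G,q)=\max\{\log_q|\mathrm{Fix}(f)| : \mathrm{IG}(f)\subseteq G\}$ and the entropy is $H(G)=\sup_{q\ge2}\mathrm{gn}(G,q)$. *)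

(* Defs.v *)
From Stdlib Require Import Reals.
From mathcomp Require Import all_boot.

Set Implicit Arguments.
Unset Strict Implicit.
Unset Printing Implicit Defensive.

Definition config (q n : nat) : finType := {ffun 'I_n -> 'I_q}.

Definition qmap (q n : nat) : finType := {ffun config q n -> config q n}.

Definition depends (q n : nat) (f : qmap q n) (u v : 'I_n) : bool :=
  [exists a : config q n, exists b : config q n,
     [forall w : 'I_n, (w != u) ==> (a w == b w)] && (f a v != f b v)].

Definition IG_sub (q n : nat) (G : rel 'I_n) (f : qmap q n) : bool :=
  [forall u : 'I_n, forall v : 'I_n, depends f u v ==> G u v].

Definition Fix (q n : nat) (f : qmap q n) : {set config q n} :=
  [set x | f x == x].

(* All candidate values are >= 0 and a constant map (IG empty, exactly one
   fixed point) gives 0, so the maximum with default 0 is the true max. *)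
Definition gn (n : nat) (G : rel 'I_n) (q : nat) : R :=
  \big[Rmax/R0]_(f : qmap q n | IG_sub G f)
     (Rdiv (ln (INR #|Fix f|)) (ln (INR q))).

Definition entropy_is (n : nat) (G : rel 'I_n) (h : R) : Prop :=
  is_lub (fun r => exists q : nat, (2 <= q)%N /\ r = gn G q) h.

(* Simple graph on vertex set {1,..,n} given by an edge list with labels in
   {1,..,n}, viewed as a symmetric digraph on 'I_n (vertex k <-> index k-1). *)
Definition graph_of (n : nat) (E : seq (nat * nat)) : rel 'I_n :=
  fun u v => ((u.+1, v.+1) \in E) || ((v.+1, u.+1) \in E).

Definition base_edges : seq (nat * nat) :=
  [:: (1,2); (2,3); (3,4); (4,5); (5,1); (6,7)].

Definition G1 : rel 'I_7 := graph_of (base_edges ++ [:: (6,1); (6,2); (7,4)]).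
Definition G2 : rel 'I_7 := graph_of (base_edges ++ [:: (6,1); (6,3); (7,2)]).
Definition G3 : rel 'I_7 := graph_of (base_edges ++ [:: (6,1); (6,3); (7,4)]).
Definition G4 : rel 'I_7 :=
  graph_of (base_edges ++ [:: (6,1); (6,3); (7,2); (7,4)]).
Definition G5 : rel 'I_7 := graph_of (base_edges ++ [:: (6,1); (7,2)]).
Definition G6 : rel 'I_7 := graph_of (base_edges ++ [:: (6,1); (7,3)]).

(* Main.v *)
Require Import Defs.
From Stdlib Require Import Reals.
From mathcomp Require Import all_boot.
Open Scope R_scope.
From Stdlib Require Import Lra.
From mathcomp Require Import Rstruct.
Set Implicit Arguments.
Unset Strict Implicit.
Unset Printing Implicit Defensive.

Lemma ln_le_x1 z : 0 < z -> ln z <= z - 1.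
Proof. move=> z0; have := exp_ineq1_le (ln z); rewrite exp_ln //; lra. Qed.

Lemma ln_le' x y : 0 < x -> x <= y -> ln x <= ln y.
Proof.
move=> x0 [xy|->]; last lra.
by apply: Rlt_le; apply: ln_increasing.
Qed.

Lemma rsum_le (I : finType) (P : pred I) (F G : I -> R) :
  (forall i, P i -> F i <= G i) ->
  \big[Rplus/0]_(i | P i) F i <= \big[Rplus/0]_(i | P i) G i.
Proof.
move=> H; apply: (big_ind2 (fun a b => a <= b)) => //; first lra.
by move=> a b c d; lra.
Qed.

Lemma rsum_const (I : finType) (P : pred I) (c : R) :
  \big[Rplus/0]_(i | P i) c = INR #|P| * c.
Proof.
rewrite big_const; elim: #|P| => [|k IH]; first by simpl; lra.
rewrite iterS IH S_INR; lra.
Qed.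

Lemma rsum_ge0 (I : finType) (P : pred I) (F : I -> R) :
  (forall i, P i -> 0 <= F i) -> 0 <= \big[Rplus/0]_(i | P i) F i.
Proof.
move=> H; apply: (big_ind (fun a => 0 <= a)) => //; first lra.
by move=> a b; lra.
Qed.

Lemma rsum_add (I : finType) (P : pred I) (F G : I -> R) :
  \big[Rplus/0]_(i | P i) (F i + G i) =
  \big[Rplus/0]_(i | P i) F i + \big[Rplus/0]_(i | P i) G i.
Proof. by rewrite big_split. Qed.

Lemma INR_pos k : (0 < k)%N -> 0 < INR k.
Proof. by move=> k0; apply: lt_0_INR; apply/ltP. Qed.

Section Ent.
Variables (q n : nat) (S : {set config q n}).

Definition agree (l : seq nat) (s t : config q n) : bool :=
  [forall i : 'I_n, (val i \in l) ==> (s i == t i)].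

Lemma agree_refl l s : agree l s s.
Proof. by apply/forallP=> i; apply/implyP. Qed.

Lemma agree_sym l s t : agree l s t -> agree l t s.
Proof.
move/forallP=> H; apply/forallP=> i; apply/implyP=> /(implyP (H i)).
by rewrite eq_sym.
Qed.

Lemma agree_trans l s t u : agree l s t -> agree l t u -> agree l s u.
Proof.
move/forallP=> H1 /forallP H2; apply/forallP=> i; apply/implyP=> Hi.
by rewrite (eqP (implyP (H1 i) Hi)) (implyP (H2 i) Hi).
Qed.

Lemma agreeP l (s t : config q n) : reflect (forall i : 'I_n, val i \in l -> s i = t i) (agree l s t).
Proof.
apply: (iffP forallP) => H i.
  by move=> Hi; apply/eqP; apply: (implyP (H i)).
by apply/implyP=> Hi; apply/eqP; apply: H.
Qed.

Definition cnt l s : nat := #|[set t in S | agree l s t]|.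

Lemma cnt_pos l s : s \in S -> (0 < cnt l s)%N.
Proof.
move=> sS; apply/card_gt0P; exists s; by rewrite inE sS agree_refl.
Qed.

Lemma cnt_eq l s s' : agree l s s' -> cnt l s = cnt l s'.
Proof.
move=> H; rewrite /cnt; apply: eq_card => t; rewrite !inE.
case: (t \in S) => //=; apply/idP/idP => H'.
  exact: agree_trans (agree_sym H) H'.
exact: agree_trans H H'.
Qed.

Lemma fiber l (Pr : pred (config q n)) :
  (forall s s', s \in S -> s' \in S -> Pr s -> Pr s' -> agree l s s') ->
  (forall s s', s \in S -> s' \in S -> Pr s -> agree l s s' -> Pr s') ->
  \big[Rplus/0]_(s | (s \in S) && Pr s) / INR (cnt l s) <= 1.
Proof.
move=> H1 H2.
case: (pickP [pred s | (s \in S) && Pr s]) => [s0 /andP[S0 P0] | none]; last first.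
  by rewrite big_pred0 //; lra.
rewrite (eq_bigr (fun _ => / INR (cnt l s0))); last first.
  by move=> s /andP[sS Ps]; rewrite (cnt_eq (H1 s0 s S0 sS P0 Ps)).
rewrite rsum_const.
have -> : #|[pred s | (s \in S) && Pr s]| = cnt l s0.
  rewrite /cnt; apply: eq_card => t; rewrite !inE.
  case tS: (t \in S) => //=; apply/idP/idP => H.
    exact: H1.
  exact: H2 H.
have := INR_pos (cnt_pos l S0); move=> h0.
rewrite Rinv_r //; lra.
Qed.

Definition Kf l : R := \big[Rplus/0]_(s in S) ln (INR (cnt l s)).


Lemma cnt_card l s : #|[pred t | (t \in S) && agree l s t]| = cnt l s.
Proof. by rewrite /cnt; apply: eq_card => t; rewrite !inE. Qed.

Lemma rsum_ind l s c :
  \big[Rplus/0]_(t in S) (if agree l s t then c else 0) = INR (cnt l s) * c.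
Proof. by rewrite -big_mkcondr rsum_const cnt_card. Qed.

Lemma K_nil : Kf [::] = INR #|S| * ln (INR #|S|).
Proof.
rewrite /Kf (eq_bigr (fun _ => ln (INR #|S|))) ?rsum_const //.
move=> s _; congr (ln (INR _)); apply: eq_card => t; rewrite !inE.
suff -> : agree [::] s t by rewrite andbT.
by apply/forallP.
Qed.

Lemma K_full l : (forall i : 'I_n, val i \in l) -> Kf l = 0.
Proof.
move=> Hl; rewrite /Kf (eq_bigr (fun _ => 0)).
  by rewrite rsum_const; lra.
move=> s sS; have -> : cnt l s = 1%N.
  rewrite /cnt -(cards1 s); apply: eq_card => t; rewrite !inE.
  apply/idP/idP.
    case/andP=> _ /agreeP H; rewrite eq_sym; apply/eqP/ffunP=> i; exact: H (Hl i).
  by move/eqP=> ->; rewrite sS agree_refl.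
by rewrite /= ln_1.
Qed.

Lemma K_fun l l' :
  (forall s t, s \in S -> t \in S -> agree l s t -> agree l' s t) ->
  Kf l <= Kf l'.
Proof.
move=> H; apply: rsum_le => s sS.
apply: ln_le'; first exact: INR_pos (cnt_pos l sS).
apply: le_INR; apply/leP; apply: subset_leq_card; apply/subsetP=> t.
by rewrite !inE => /andP[tS Ha]; rewrite tS (H s t sS tS Ha).
Qed.

Lemma K_mono l1 l2 : (forall i : 'I_n, val i \in l1 -> val i \in l2) ->
  Kf l2 <= Kf l1.
Proof.
move=> H; apply: K_fun => s t _ _ /agreeP Ha; apply/agreeP=> i Hi.
exact: Ha (H i Hi).
Qed.

Lemma rsum_lnz (F : config q n -> R) :
  (forall s, s \in S -> 0 < F s) ->
  \big[Rplus/0]_(s in S) ln (F s) <= \big[Rplus/0]_(s in S) F s - INR #|S|.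
Proof.
move=> H; apply: (Rle_trans _ (\big[Rplus/0]_(s in S) (F s + -1))).
  apply: rsum_le => s sS; have := ln_le_x1 (H s sS); lra.
rewrite rsum_add rsum_const.
have -> : #|[pred s | s \in S]| = #|S| by apply: eq_card.
lra.
Qed.


Lemma K_sub A B C D :
  (forall i : 'I_n, (val i \in C) = (val i \in A) || (val i \in B)) ->
  (forall i : 'I_n, val i \in D -> (val i \in A) && (val i \in B)) ->
  Kf A + Kf B <= Kf C + Kf D.
Proof.
move=> hC hD.
have agC s t : agree C s t = agree A s t && agree B s t.
  apply/agreeP/andP.
    move=> H; split; apply/agreeP=> i Hi; apply: H; by rewrite hC Hi ?orbT.
  case=> /agreeP H1 /agreeP H2 i; rewrite hC => /orP[Hi|Hi]; by [apply: H1|apply: H2].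
have agDA s t : agree A s t -> agree D s t.
  move/agreeP=> H; apply/agreeP=> i /hD /andP[Hi _]; exact: H.
have agDB s t : agree B s t -> agree D s t.
  move/agreeP=> H; apply/agreeP=> i /hD /andP[_ Hi]; exact: H.
pose nX X s := INR (cnt X s).
have nXpos X s : s \in S -> 0 < nX X s by move=> sS; apply: INR_pos; apply: cnt_pos.
pose w s := / (nX C s * nX D s).
pose z s := nX A s * nX B s * w s.
have zpos s : s \in S -> 0 < z s.
  move=> sS; rewrite /z /w; have := nXpos A s sS; have := nXpos B s sS.
  have := nXpos C s sS; have := nXpos D s sS => h1 h2 h3 h4.
  apply: Rmult_lt_0_compat; first by apply: Rmult_lt_0_compat.
  by apply: Rinv_0_lt_compat; apply: Rmult_lt_0_compat.
have step1 : Kf A + Kf B - (Kf C + Kf D) = \big[Rplus/0]_(s in S) ln (z s).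
  rewrite /Kf.
  have -> : forall a b c d : R, a + b - (c + d) = a + b + (-1 * c + -1 * d) by move=> *; lra.
  rewrite !big_distrr /= -!rsum_add; apply: eq_bigr => s sS.
  have := nXpos A s sS; have := nXpos B s sS.
  have := nXpos C s sS; have := nXpos D s sS => h1 h2 h3 h4.
  rewrite /z /w ln_mult; last by apply: Rinv_0_lt_compat; apply: Rmult_lt_0_compat.
    rewrite ln_mult // ln_Rinv; last by apply: Rmult_lt_0_compat.
    rewrite ln_mult // /nX; lra.
  by apply: Rmult_lt_0_compat.
have step2 s : s \in S -> z s = \big[Rplus/0]_(a in S) \big[Rplus/0]_(b in S)
     (if agree A s a then (if agree B s b then w s else 0) else 0).
  move=> sS.
  rewrite (eq_bigr (fun a => if agree A s a then nX B s * w s else 0)).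
    by rewrite rsum_ind /z /nX; lra.
  move=> a _; case: (agree A s a); last by rewrite big1.
  by rewrite rsum_ind.
have step4 a b : a \in S -> b \in S ->
    \big[Rplus/0]_(s in S) (if agree A s a then (if agree B s b then w s else 0) else 0)
    <= (if agree D a b then / nX D a else 0).
  move=> aS bS.
  case: (pickP [pred s | (s \in S) && (agree A s a && agree B s b)]) => [s0 | none]; last first.
    rewrite big1; last first.
      move=> s sS; have := none s; rewrite /= sS /=.
      by case: (agree A s a); case: (agree B s b).
    case: ifP => _; last lra.
    by apply: Rlt_le; apply: Rinv_0_lt_compat; apply: nXpos.
  move=> /= /andP[s0S /andP[A0 B0]].
  have Dab : agree D a b.
    exact: agree_trans (agree_sym (agDA _ _ A0)) (agDB _ _ B0).
  rewrite Dab.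
  rewrite (eq_bigr (fun s => if agree A s a && agree B s b then / nX C s * / nX D a else 0)); last first.
    move=> s sS; case As: (agree A s a); case Bs: (agree B s b) => //=.
    rewrite /w /nX (cnt_eq (agDA _ _ As)) Rinv_mult //.
  rewrite -big_mkcondr -big_distrl /=.
  have hD0 := nXpos D a aS.
  have := Rinv_0_lt_compat _ hD0.
  have : \big[Rplus/0]_(s | (s \in S) && (agree A s a && agree B s b)) / nX C s <= 1.
    apply: fiber.
      move=> s s' sS s'S /andP[H1 H2] /andP[H3 H4]; rewrite agC.
      by rewrite (agree_trans H1 (agree_sym H3)) (agree_trans H2 (agree_sym H4)).
    move=> s s' sS s'S /andP[H1 H2]; rewrite agC => /andP[H3 H4].
    by rewrite (agree_trans (agree_sym H3) H1) (agree_trans (agree_sym H4) H2).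
  move=> h1 h2.
  apply: Rle_trans (Rmult_le_compat_r _ _ _ (Rlt_le _ _ h2) h1) _; lra.
have step5 : \big[Rplus/0]_(a in S) \big[Rplus/0]_(b in S)
    (if agree D a b then / nX D a else 0) = INR #|S|.
  rewrite (eq_bigr (fun _ => 1)).
    rewrite rsum_const; have -> : #|[pred s | s \in S]| = #|S| by apply: eq_card.
    lra.
  move=> a aS; rewrite rsum_ind Rinv_r //; have := nXpos D a aS; rewrite /nX; lra.
have step3 : \big[Rplus/0]_(s in S) z s <= INR #|S|.
  rewrite (eq_bigr _ step2) exchange_big /=.
  rewrite -step5; apply: rsum_le => a aS.
  rewrite exchange_big /=; apply: rsum_le => b bS; exact: step4.
have := rsum_lnz zpos; lra.
Qed.


Lemma K_single l (v : 'I_n) : (forall i : 'I_n, (val i \in l) = (i == v)) ->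
  (0 < #|S|)%N ->
  INR #|S| * ln (INR #|S|) - INR #|S| * ln (INR q) <= Kf l.
Proof.
move=> hl S0.
have [s1 s1S] : exists s, s \in S by apply/card_gt0P.
have q0 : (0 < q)%N by case: (s1 v) => j; case: q.
pose N := INR #|S|; pose Q := INR q.
have N0 : 0 < N by apply: INR_pos.
have Q0 : 0 < Q by apply: INR_pos.
pose nX s := INR (cnt l s).
have nXpos s : s \in S -> 0 < nX s by move=> sS; apply: INR_pos; apply: cnt_pos.
pose z s := N * / (Q * nX s).
have zpos s : s \in S -> 0 < z s.
  move=> sS; have := nXpos s sS => h; apply: Rmult_lt_0_compat => //.
  by apply: Rinv_0_lt_compat; apply: Rmult_lt_0_compat.
have step1 : \big[Rplus/0]_(s in S) ln (z s) =
   N * ln N - N * ln Q - Kf l.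
  have -> : N * ln N - N * ln Q - Kf l = N * (ln N - ln Q) + -1 * Kf l by lra.
  rewrite /Kf big_distrr /= .
  have -> : N * (ln N - ln Q) = \big[Rplus/0]_(s in S) (ln N - ln Q).
    rewrite rsum_const; have -> : #|[pred s | s \in S]| = #|S| by apply: eq_card.
    by [].
  rewrite -rsum_add; apply: eq_bigr => s sS; have := nXpos s sS => h.
  rewrite /z ln_mult //; last by apply: Rinv_0_lt_compat; apply: Rmult_lt_0_compat.
  rewrite ln_Rinv; last by apply: Rmult_lt_0_compat.
  rewrite ln_mult // /nX; lra.
have inv_le : \big[Rplus/0]_(s in S) / nX s <= Q.
  rewrite (@partition_big _ _ _ _ _ _ (fun s => s \in S) (fun s : config q n => s v) xpredT) //=.
  apply: Rle_trans (_ : _ <= \big[Rplus/0]_(c : 'I_q) 1) _.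
    apply: rsum_le => c _; apply: fiber.
      move=> s s' _ _ /eqP e1 /eqP e2; apply/agreeP=> i; rewrite hl => /eqP ->.
      by rewrite e1 e2.
    move=> s s' _ _ /eqP e1 /agreeP H; apply/eqP; rewrite -(H v) //.
    by rewrite hl.
  rewrite rsum_const card_ord /Q; lra.
have zsum : \big[Rplus/0]_(s in S) z s <= N.
  rewrite /z -big_distrr /=.
  have -> : \big[Rplus/0]_(i in S) / (Q * nX i) = / Q * \big[Rplus/0]_(i in S) / nX i.
    rewrite big_distrr /=; apply: eq_bigr => s sS; rewrite Rinv_mult //.
  have := Rinv_0_lt_compat _ Q0 => hQ.
  have h2 : / Q * \big[Rplus/0]_(i in S) / nX i <= / Q * Q.
    by apply: Rmult_le_compat_l; [lra | exact: inv_le].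
  rewrite Rinv_l in h2; last lra.
  have := Rmult_le_compat_l _ _ _ (Rlt_le _ _ N0) h2; lra.
have := rsum_lnz zpos.
have -> : INR #|S| = N by [].
have -> : INR q = Q by []. lra.
Qed.

End Ent.

Lemma allIotaP n (P : pred nat) : all P (iota 0 n) -> forall i : 'I_n, P (val i).
Proof. move/allP=> H i; apply: H; rewrite mem_iota /=; exact: ltn_ord. Qed.

Definition chkU n (A B C : seq nat) :=
  all (fun k => (k \in C) == (k \in A) || (k \in B)) (iota 0 n).
Definition chkI n (A B D : seq nat) :=
  all (fun k => (k \in D) ==> (k \in A) && (k \in B)) (iota 0 n).
Definition chkSub n (l1 l2 : seq nat) :=
  all (fun k => (k \in l1) ==> (k \in l2)) (iota 0 n).
Definition chkSingle n (l : seq nat) (v : nat) :=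
  all (fun k => (k \in l) == (k == v)) (iota 0 n).
Definition chkFull n (l : seq nat) := all (fun k => k \in l) (iota 0 n).
Definition chkAdd n (L L' : seq nat) (v : nat) :=
  all (fun k => (k \in L') ==> (k \in L) || (k == v)) (iota 0 n).

Section H.
Variables (q n : nat) (S : {set config q n}).
Hypothesis S0 : (0 < #|S|)%N.
Definition hh l := ln (INR #|S|) - Kf S l / INR #|S|.

Let N0 : 0 < INR #|S|. Proof. exact: INR_pos. Qed.

Lemma K_to_h l l' : Kf S l <= Kf S l' -> hh l' <= hh l.
Proof.
move=> H; rewrite /hh; have h := Rinv_0_lt_compat _ N0.
have := Rmult_le_compat_r _ _ _ (Rlt_le _ _ h) H; rewrite /Rdiv; lra.
Qed.

Lemma hh_nil : hh [::] = 0.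
Proof. rewrite /hh K_nil /Rdiv Rmult_comm -Rmult_assoc Rinv_l; lra. Qed.

Lemma hh_full l : chkFull n l -> hh l = ln (INR #|S|).
Proof. move/allIotaP=> H; rewrite /hh K_full //; rewrite /Rdiv; lra. Qed.

Lemma hh_single l v : (v < n)%N -> chkSingle n l v -> hh l <= ln (INR q).
Proof.
move=> vn /allIotaP H.
have := @K_single q n S l (Ordinal vn) (fun i => eqP (H i) : _) S0.
move=> K; rewrite /hh.
have h := Rinv_0_lt_compat _ N0.
have := Rmult_le_compat_r _ _ _ (Rlt_le _ _ h) K.
have -> : (INR #|S| * ln (INR #|S|) - INR #|S| * ln (INR q)) * / INR #|S|
   = (ln (INR #|S|) - ln (INR q)) * (INR #|S| * / INR #|S|) by ring.
rewrite Rinv_r; last lra.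
rewrite /Rdiv; lra.
Qed.

Lemma hh_sub A B C D : chkU n A B C -> chkI n A B D -> hh C + hh D <= hh A + hh B.
Proof.
move=> /allIotaP hC /allIotaP hD.
have := @K_sub q n S A B C D (fun i => eqP (hC i)) (fun i => implyP (hD i)).
move=> K; rewrite /hh.
have h := Rinv_0_lt_compat _ N0.
have := Rmult_le_compat_r _ _ _ (Rlt_le _ _ h) K; rewrite /Rdiv; lra.
Qed.

Lemma hh_mono l1 l2 : chkSub n l1 l2 -> hh l1 <= hh l2.
Proof. move/allIotaP=> H; apply: K_to_h; apply: K_mono => i; exact: (implyP (H i)). Qed.

End H.

Lemma no_dep q n (f : qmap q n) (u v : 'I_n) : ~~ depends f u v ->
  forall a b : config q n, (forall w, w != u -> a w = b w) -> f a v = f b v.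
Proof.
move=> H a b Hab; apply/eqP; apply: contraNT H => Hne.
apply/existsP; exists a; apply/existsP; exists b; rewrite Hne andbT.
by apply/forallP => w; apply/implyP=> /Hab ->.
Qed.

Lemma dep_agree q n (G : rel 'I_n) (f : qmap q n) (v : 'I_n) (L : seq nat) :
  IG_sub G f -> (forall u : 'I_n, G u v -> val u \in L) ->
  forall a b : config q n, agree L a b -> f a v = f b v.
Proof.
move=> /forallP IG HL a b /agreeP Hab.
pose mix (k : nat) : config q n := [ffun i : 'I_n => if (val i < k)%N then b i else a i].
have step k : f (mix k.+1) v = f (mix k) v.
  case: (ltnP k n) => kn; last first.
    congr (f _ v); apply/ffunP=> i; rewrite !ffunE.
    have h1 : (val i < k)%N by apply: leq_trans (ltn_ord i) kn.
    by rewrite h1 ltnS (ltnW h1).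
  pose u := Ordinal kn.
  case Guv: (G u v).
    congr (f _ v); apply/ffunP=> i; rewrite !ffunE ltnS leq_eqVlt.
    case: eqP => // ei; rewrite /=; case: ifP => // _.
    have -> : i = u by apply: val_inj.
    by rewrite (Hab u (HL u Guv)).
  have nd : ~~ depends f u v.
    by have := forallP (IG u) v; rewrite Guv implybF.
  apply: (no_dep nd) => w wu; rewrite !ffunE ltnS leq_eqVlt.
  case: eqP => //= ew; exfalso; move/eqP: wu; apply; exact: val_inj.
have mix0 : mix 0%N = a by apply/ffunP=> i; rewrite ffunE.
have mixn : mix n = b by apply/ffunP=> i; rewrite ffunE ltn_ord.
have all_k k : f (mix k) v = f a v.
  elim: k => [|k IH]; first by rewrite mix0.
  by rewrite step IH.
by rewrite -mixn all_k.
Qed.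

Lemma hh_fun q n (G : rel 'I_n) (f : qmap q n) (v : 'I_n) (L L' : seq nat) :
  (0 < #|Fix f|)%N -> IG_sub G f -> [forall u : 'I_n, G u v ==> (val u \in L)] ->
  chkAdd n L L' v -> hh (Fix f) L' <= hh (Fix f) L.
Proof.
move=> S0 IG /forallP HL /allIotaP HA; apply: K_to_h => //.
apply: K_fun => s t sS tS Hst; apply/agreeP=> i /(implyP (HA i)) /orP[Hi|/eqP Hi].
  by move/agreeP: Hst => Hst; apply: Hst.
have -> : i = v by apply: val_inj.
move: sS tS; rewrite !inE => /eqP fs /eqP ft.
rewrite -{1}fs -{1}ft; apply: (dep_agree (L:=L) IG) Hst => u; exact: (implyP (HL u)).
Qed.

Ltac fin7 := apply/forallP; case=> [[|[|[|[|[|[|[|k]]]]]]] Hk] //; vm_compute; reflexivity.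
Lemma chk_nb1_0 : [forall u : 'I_7, G1 u (@Ordinal 7 0 isT) ==> (val u \in [::1%N;4%N;5%N])].
Proof. fin7. Qed.
Lemma chk_nb1_1 : [forall u : 'I_7, G1 u (@Ordinal 7 1 isT) ==> (val u \in [::0%N;2%N;5%N])].
Proof. fin7. Qed.
Lemma chk_nb1_2 : [forall u : 'I_7, G1 u (@Ordinal 7 2 isT) ==> (val u \in [::1%N;3%N])].
Proof. fin7. Qed.
Lemma chk_nb1_3 : [forall u : 'I_7, G1 u (@Ordinal 7 3 isT) ==> (val u \in [::2%N;4%N;6%N])].
Proof. fin7. Qed.
Lemma chk_nb1_4 : [forall u : 'I_7, G1 u (@Ordinal 7 4 isT) ==> (val u \in [::0%N;3%N])].
Proof. fin7. Qed.
Lemma chk_nb1_5 : [forall u : 'I_7, G1 u (@Ordinal 7 5 isT) ==> (val u \in [::0%N;1%N;6%N])].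
Proof. fin7. Qed.
Lemma chk_nb1_6 : [forall u : 'I_7, G1 u (@Ordinal 7 6 isT) ==> (val u \in [::3%N;5%N])].
Proof. fin7. Qed.

Lemma bound_G1 q (f : qmap q 7) : IG_sub G1 f -> (0 < #|Fix f|)%N ->
  ln (INR #|Fix f|) <= (11/3) * ln (INR q).
Proof.
move=> IG S0.
have e0 := @hh_nil q 7 _ S0.
have eF := @hh_full q 7 (Fix f) [::0%N;1%N;2%N;3%N;4%N;5%N;6%N] isT.
have c1 := @hh_single q 7 _ S0 [::0%N] 0%N isT isT.
have c2 := @hh_single q 7 _ S0 [::1%N] 1%N isT isT.
have c3 := @hh_single q 7 _ S0 [::2%N] 2%N isT isT.
have c4 := @hh_single q 7 _ S0 [::3%N] 3%N isT isT.
have c5 := @hh_single q 7 _ S0 [::4%N] 4%N isT isT.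
have c6 := @hh_single q 7 _ S0 [::5%N] 5%N isT isT.
have c7 := @hh_single q 7 _ S0 [::6%N] 6%N isT isT.
have c8 := @hh_sub q 7 _ S0 [::0%N] [::1%N] [::0%N;1%N] [::] isT isT.
have c9 := @hh_sub q 7 _ S0 [::0%N;1%N;3%N] [::1%N;2%N;3%N] [::0%N;1%N;2%N;3%N] [::1%N;3%N] isT isT.
have c10 := @hh_sub q 7 _ S0 [::0%N;3%N;4%N] [::2%N;3%N;4%N] [::0%N;2%N;3%N;4%N] [::3%N;4%N] isT isT.
have c11 := @hh_sub q 7 _ S0 [::0%N] [::3%N] [::0%N;3%N] [::] isT isT.
have c12 := @hh_sub q 7 _ S0 [::0%N;6%N] [::3%N;6%N] [::0%N;3%N;6%N] [::6%N] isT isT.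
have c13 := @hh_sub q 7 _ S0 [::0%N;4%N;5%N;6%N] [::3%N;4%N;5%N;6%N] [::0%N;3%N;4%N;5%N;6%N] [::4%N;5%N;6%N] isT isT.
have c14 := @hh_sub q 7 _ S0 [::0%N;2%N;3%N;4%N;6%N] [::2%N;3%N;4%N;5%N;6%N] [::0%N;2%N;3%N;4%N;5%N;6%N] [::2%N;3%N;4%N;6%N] isT isT.
have c15 := @hh_sub q 7 _ S0 [::0%N;1%N] [::1%N;6%N] [::0%N;1%N;6%N] [::1%N] isT isT.
have c16 := @hh_sub q 7 _ S0 [::0%N;4%N;5%N] [::4%N;5%N;6%N] [::0%N;4%N;5%N;6%N] [::4%N;5%N] isT isT.
have c17 := @hh_sub q 7 _ S0 [::0%N;2%N;3%N;4%N] [::2%N;3%N;4%N;6%N] [::0%N;2%N;3%N;4%N;6%N] [::2%N;3%N;4%N] isT isT.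
have c18 := @hh_sub q 7 _ S0 [::0%N;1%N;2%N;5%N] [::0%N;2%N;3%N;5%N] [::0%N;1%N;2%N;3%N;5%N] [::0%N;2%N;5%N] isT isT.
have c19 := @hh_sub q 7 _ S0 [::0%N;1%N;4%N;5%N] [::0%N;3%N;4%N;5%N] [::0%N;1%N;3%N;4%N;5%N] [::0%N;4%N;5%N] isT isT.
have c20 := @hh_sub q 7 _ S0 [::0%N;1%N;5%N;6%N] [::0%N;3%N;5%N;6%N] [::0%N;1%N;3%N;5%N;6%N] [::0%N;5%N;6%N] isT isT.
have c21 := @hh_sub q 7 _ S0 [::1%N] [::4%N] [::1%N;4%N] [::] isT isT.
have c22 := @hh_sub q 7 _ S0 [::0%N;1%N;2%N;3%N;5%N;6%N] [::0%N;2%N;3%N;4%N;5%N;6%N] [::0%N;1%N;2%N;3%N;4%N;5%N;6%N] [::0%N;2%N;3%N;5%N;6%N] isT isT.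
have c23 := @hh_sub q 7 _ S0 [::1%N;4%N] [::4%N;5%N] [::1%N;4%N;5%N] [::4%N] isT isT.
have c24 := @hh_sub q 7 _ S0 [::1%N] [::6%N] [::1%N;6%N] [::] isT isT.
have c25 := @hh_sub q 7 _ S0 [::0%N;1%N;2%N;3%N;5%N] [::0%N;2%N;3%N;5%N;6%N] [::0%N;1%N;2%N;3%N;5%N;6%N] [::0%N;2%N;3%N;5%N] isT isT.
have c26 := @hh_sub q 7 _ S0 [::0%N;1%N;3%N;4%N;5%N] [::0%N;3%N;4%N;5%N;6%N] [::0%N;1%N;3%N;4%N;5%N;6%N] [::0%N;3%N;4%N;5%N] isT isT.
have c27 := @hh_sub q 7 _ S0 [::2%N] [::4%N] [::2%N;4%N] [::] isT isT.
have c28 := @hh_sub q 7 _ S0 [::0%N;2%N;3%N;5%N;6%N] [::0%N;3%N;4%N;5%N;6%N] [::0%N;2%N;3%N;4%N;5%N;6%N] [::0%N;3%N;5%N;6%N] isT isT.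
have c29 := @hh_sub q 7 _ S0 [::0%N;1%N;2%N;3%N;5%N;6%N] [::0%N;1%N;3%N;4%N;5%N;6%N] [::0%N;1%N;2%N;3%N;4%N;5%N;6%N] [::0%N;1%N;3%N;5%N;6%N] isT isT.
have c30 := @hh_sub q 7 _ S0 [::2%N;3%N;4%N;6%N] [::3%N;4%N;5%N;6%N] [::2%N;3%N;4%N;5%N;6%N] [::3%N;4%N;6%N] isT isT.
have c31 := @hh_sub q 7 _ S0 [::0%N;1%N;2%N;3%N;6%N] [::0%N;1%N;3%N;5%N;6%N] [::0%N;1%N;2%N;3%N;5%N;6%N] [::0%N;1%N;3%N;6%N] isT isT.
have c32 := @hh_sub q 7 _ S0 [::2%N;4%N] [::4%N;6%N] [::2%N;4%N;6%N] [::4%N] isT isT.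
have c33 := @hh_sub q 7 _ S0 [::0%N;1%N;2%N;3%N] [::0%N;1%N;3%N;6%N] [::0%N;1%N;2%N;3%N;6%N] [::0%N;1%N;3%N] isT isT.
have c34 := @hh_sub q 7 _ S0 [::3%N] [::5%N] [::3%N;5%N] [::] isT isT.
have c35 := @hh_sub q 7 _ S0 [::0%N;3%N;4%N;6%N] [::0%N;4%N;5%N;6%N] [::0%N;3%N;4%N;5%N;6%N] [::0%N;4%N;6%N] isT isT.
have c36 := @hh_sub q 7 _ S0 [::0%N;4%N;6%N] [::0%N;5%N;6%N] [::0%N;4%N;5%N;6%N] [::0%N;6%N] isT isT.
have c37 := @hh_sub q 7 _ S0 [::3%N;4%N;6%N] [::3%N;5%N;6%N] [::3%N;4%N;5%N;6%N] [::3%N;6%N] isT isT.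
have c38 := @hh_sub q 7 _ S0 [::4%N] [::6%N] [::4%N;6%N] [::] isT isT.
have c39 := @hh_sub q 7 _ S0 [::3%N;4%N] [::3%N;6%N] [::3%N;4%N;6%N] [::3%N] isT isT.
have c40 := @hh_sub q 7 _ S0 [::0%N;3%N;4%N] [::0%N;3%N;6%N] [::0%N;3%N;4%N;6%N] [::0%N;3%N] isT isT.
have c41 := @hh_fun q 7 _ f (@Ordinal 7 0 isT) [::1%N;4%N;5%N] [::0%N;1%N;4%N;5%N] S0 IG (chk_nb1_0) isT.
have c42 := @hh_fun q 7 _ f (@Ordinal 7 1 isT) [::0%N;2%N;5%N] [::0%N;1%N;2%N;5%N] S0 IG (chk_nb1_1) isT.
have c43 := @hh_fun q 7 _ f (@Ordinal 7 2 isT) [::1%N;3%N] [::1%N;2%N;3%N] S0 IG (chk_nb1_2) isT.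
have c44 := @hh_fun q 7 _ f (@Ordinal 7 3 isT) [::2%N;4%N;6%N] [::2%N;3%N;4%N;6%N] S0 IG (chk_nb1_3) isT.
have c45 := @hh_fun q 7 _ f (@Ordinal 7 4 isT) [::0%N;3%N] [::0%N;3%N;4%N] S0 IG (chk_nb1_4) isT.
have c46 := @hh_fun q 7 _ f (@Ordinal 7 5 isT) [::0%N;1%N;6%N] [::0%N;1%N;5%N;6%N] S0 IG (chk_nb1_5) isT.
have c47 := @hh_fun q 7 _ f (@Ordinal 7 6 isT) [::3%N;5%N] [::3%N;5%N;6%N] S0 IG (chk_nb1_6) isT.
have p1 := @hh_mono q 7 _ S0 [::] [::0%N] isT.
have p2 := @hh_mono q 7 _ S0 [::] [::1%N] isT.
have p3 := @hh_mono q 7 _ S0 [::] [::0%N;1%N] isT.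
have p4 := @hh_mono q 7 _ S0 [::] [::2%N] isT.
have p8 := @hh_mono q 7 _ S0 [::] [::3%N] isT.
have p9 := @hh_mono q 7 _ S0 [::] [::0%N;3%N] isT.
have p10 := @hh_mono q 7 _ S0 [::] [::1%N;3%N] isT.
have p11 := @hh_mono q 7 _ S0 [::] [::0%N;1%N;3%N] isT.
have p14 := @hh_mono q 7 _ S0 [::] [::1%N;2%N;3%N] isT.
have p15 := @hh_mono q 7 _ S0 [::] [::0%N;1%N;2%N;3%N] isT.
have p16 := @hh_mono q 7 _ S0 [::] [::4%N] isT.
have p18 := @hh_mono q 7 _ S0 [::] [::1%N;4%N] isT.
have p20 := @hh_mono q 7 _ S0 [::] [::2%N;4%N] isT.
have p24 := @hh_mono q 7 _ S0 [::] [::3%N;4%N] isT.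
have p25 := @hh_mono q 7 _ S0 [::] [::0%N;3%N;4%N] isT.
have p28 := @hh_mono q 7 _ S0 [::] [::2%N;3%N;4%N] isT.
have p29 := @hh_mono q 7 _ S0 [::] [::0%N;2%N;3%N;4%N] isT.
have p32 := @hh_mono q 7 _ S0 [::] [::5%N] isT.
have p37 := @hh_mono q 7 _ S0 [::] [::0%N;2%N;5%N] isT.
have p39 := @hh_mono q 7 _ S0 [::] [::0%N;1%N;2%N;5%N] isT.
have p40 := @hh_mono q 7 _ S0 [::] [::3%N;5%N] isT.
have p45 := @hh_mono q 7 _ S0 [::] [::0%N;2%N;3%N;5%N] isT.
have p47 := @hh_mono q 7 _ S0 [::] [::0%N;1%N;2%N;3%N;5%N] isT.
have p48 := @hh_mono q 7 _ S0 [::] [::4%N;5%N] isT.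
have p49 := @hh_mono q 7 _ S0 [::] [::0%N;4%N;5%N] isT.
have p50 := @hh_mono q 7 _ S0 [::] [::1%N;4%N;5%N] isT.
have p51 := @hh_mono q 7 _ S0 [::] [::0%N;1%N;4%N;5%N] isT.
have p57 := @hh_mono q 7 _ S0 [::] [::0%N;3%N;4%N;5%N] isT.
have p59 := @hh_mono q 7 _ S0 [::] [::0%N;1%N;3%N;4%N;5%N] isT.
have p64 := @hh_mono q 7 _ S0 [::] [::6%N] isT.
have p65 := @hh_mono q 7 _ S0 [::] [::0%N;6%N] isT.
have p66 := @hh_mono q 7 _ S0 [::] [::1%N;6%N] isT.
have p67 := @hh_mono q 7 _ S0 [::] [::0%N;1%N;6%N] isT.
have p72 := @hh_mono q 7 _ S0 [::] [::3%N;6%N] isT.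
have p73 := @hh_mono q 7 _ S0 [::] [::0%N;3%N;6%N] isT.
have p75 := @hh_mono q 7 _ S0 [::] [::0%N;1%N;3%N;6%N] isT.
have p79 := @hh_mono q 7 _ S0 [::] [::0%N;1%N;2%N;3%N;6%N] isT.
have p80 := @hh_mono q 7 _ S0 [::] [::4%N;6%N] isT.
have p81 := @hh_mono q 7 _ S0 [::] [::0%N;4%N;6%N] isT.
have p84 := @hh_mono q 7 _ S0 [::] [::2%N;4%N;6%N] isT.
have p88 := @hh_mono q 7 _ S0 [::] [::3%N;4%N;6%N] isT.
have p89 := @hh_mono q 7 _ S0 [::] [::0%N;3%N;4%N;6%N] isT.
have p92 := @hh_mono q 7 _ S0 [::] [::2%N;3%N;4%N;6%N] isT.
have p93 := @hh_mono q 7 _ S0 [::] [::0%N;2%N;3%N;4%N;6%N] isT.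
have p97 := @hh_mono q 7 _ S0 [::] [::0%N;5%N;6%N] isT.
have p99 := @hh_mono q 7 _ S0 [::] [::0%N;1%N;5%N;6%N] isT.
have p104 := @hh_mono q 7 _ S0 [::] [::3%N;5%N;6%N] isT.
have p105 := @hh_mono q 7 _ S0 [::] [::0%N;3%N;5%N;6%N] isT.
have p107 := @hh_mono q 7 _ S0 [::] [::0%N;1%N;3%N;5%N;6%N] isT.
have p109 := @hh_mono q 7 _ S0 [::] [::0%N;2%N;3%N;5%N;6%N] isT.
have p111 := @hh_mono q 7 _ S0 [::] [::0%N;1%N;2%N;3%N;5%N;6%N] isT.
have p112 := @hh_mono q 7 _ S0 [::] [::4%N;5%N;6%N] isT.
have p113 := @hh_mono q 7 _ S0 [::] [::0%N;4%N;5%N;6%N] isT.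
have p120 := @hh_mono q 7 _ S0 [::] [::3%N;4%N;5%N;6%N] isT.
have p121 := @hh_mono q 7 _ S0 [::] [::0%N;3%N;4%N;5%N;6%N] isT.
have p123 := @hh_mono q 7 _ S0 [::] [::0%N;1%N;3%N;4%N;5%N;6%N] isT.
have p124 := @hh_mono q 7 _ S0 [::] [::2%N;3%N;4%N;5%N;6%N] isT.
have p125 := @hh_mono q 7 _ S0 [::] [::0%N;2%N;3%N;4%N;5%N;6%N] isT.
have p127 := @hh_mono q 7 _ S0 [::] [::0%N;1%N;2%N;3%N;4%N;5%N;6%N] isT.
lra.
Qed.

Lemma chk_nb4_0 : [forall u : 'I_7, G4 u (@Ordinal 7 0 isT) ==> (val u \in [::1%N;4%N;5%N])].
Proof. fin7. Qed.
Lemma chk_nb4_1 : [forall u : 'I_7, G4 u (@Ordinal 7 1 isT) ==> (val u \in [::0%N;2%N;6%N])].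
Proof. fin7. Qed.
Lemma chk_nb4_2 : [forall u : 'I_7, G4 u (@Ordinal 7 2 isT) ==> (val u \in [::1%N;3%N;5%N])].
Proof. fin7. Qed.
Lemma chk_nb4_3 : [forall u : 'I_7, G4 u (@Ordinal 7 3 isT) ==> (val u \in [::2%N;4%N;6%N])].
Proof. fin7. Qed.
Lemma chk_nb4_4 : [forall u : 'I_7, G4 u (@Ordinal 7 4 isT) ==> (val u \in [::0%N;3%N])].
Proof. fin7. Qed.
Lemma chk_nb4_5 : [forall u : 'I_7, G4 u (@Ordinal 7 5 isT) ==> (val u \in [::0%N;2%N;6%N])].
Proof. fin7. Qed.
Lemma chk_nb4_6 : [forall u : 'I_7, G4 u (@Ordinal 7 6 isT) ==> (val u \in [::1%N;3%N;5%N])].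
Proof. fin7. Qed.

Lemma bound_G4 q (f : qmap q 7) : IG_sub G4 f -> (0 < #|Fix f|)%N ->
  ln (INR #|Fix f|) <= (7/2) * ln (INR q).
Proof.
move=> IG S0.
have e0 := @hh_nil q 7 _ S0.
have eF := @hh_full q 7 (Fix f) [::0%N;1%N;2%N;3%N;4%N;5%N;6%N] isT.
have c1 := @hh_single q 7 _ S0 [::0%N] 0%N isT isT.
have c2 := @hh_single q 7 _ S0 [::1%N] 1%N isT isT.
have c3 := @hh_single q 7 _ S0 [::2%N] 2%N isT isT.
have c4 := @hh_single q 7 _ S0 [::3%N] 3%N isT isT.
have c5 := @hh_single q 7 _ S0 [::4%N] 4%N isT isT.
have c6 := @hh_single q 7 _ S0 [::5%N] 5%N isT isT.
have c7 := @hh_single q 7 _ S0 [::6%N] 6%N isT isT.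
have c8 := @hh_sub q 7 _ S0 [::0%N;6%N] [::2%N;6%N] [::0%N;2%N;6%N] [::6%N] isT isT.
have c9 := @hh_sub q 7 _ S0 [::0%N;1%N;3%N;4%N;5%N;6%N] [::1%N;2%N;3%N;4%N;5%N;6%N] [::0%N;1%N;2%N;3%N;4%N;5%N;6%N] [::1%N;3%N;4%N;5%N;6%N] isT isT.
have c10 := @hh_sub q 7 _ S0 [::0%N;1%N;2%N;6%N] [::1%N;2%N;3%N;6%N] [::0%N;1%N;2%N;3%N;6%N] [::1%N;2%N;6%N] isT isT.
have c11 := @hh_sub q 7 _ S0 [::0%N;1%N;4%N;5%N] [::1%N;3%N;4%N;5%N] [::0%N;1%N;3%N;4%N;5%N] [::1%N;4%N;5%N] isT isT.
have c12 := @hh_sub q 7 _ S0 [::0%N] [::6%N] [::0%N;6%N] [::] isT isT.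
have c13 := @hh_sub q 7 _ S0 [::0%N;1%N;3%N;4%N;5%N] [::1%N;3%N;4%N;5%N;6%N] [::0%N;1%N;3%N;4%N;5%N;6%N] [::1%N;3%N;4%N;5%N] isT isT.
have c14 := @hh_sub q 7 _ S0 [::1%N] [::3%N] [::1%N;3%N] [::] isT isT.
have c15 := @hh_sub q 7 _ S0 [::1%N;2%N;4%N;6%N] [::2%N;3%N;4%N;6%N] [::1%N;2%N;3%N;4%N;6%N] [::2%N;4%N;6%N] isT isT.
have c16 := @hh_sub q 7 _ S0 [::1%N;2%N] [::2%N;4%N] [::1%N;2%N;4%N] [::2%N] isT isT.
have c17 := @hh_sub q 7 _ S0 [::0%N;1%N;2%N;3%N] [::0%N;2%N;3%N;4%N] [::0%N;1%N;2%N;3%N;4%N] [::0%N;2%N;3%N] isT isT.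
have c18 := @hh_sub q 7 _ S0 [::1%N] [::5%N] [::1%N;5%N] [::] isT isT.
have c19 := @hh_sub q 7 _ S0 [::0%N;1%N;2%N;4%N;6%N] [::0%N;2%N;4%N;5%N;6%N] [::0%N;1%N;2%N;4%N;5%N;6%N] [::0%N;2%N;4%N;6%N] isT isT.
have c20 := @hh_sub q 7 _ S0 [::2%N] [::4%N] [::2%N;4%N] [::] isT isT.
have c21 := @hh_sub q 7 _ S0 [::0%N;2%N;3%N] [::0%N;3%N;4%N] [::0%N;2%N;3%N;4%N] [::0%N;3%N] isT isT.
have c22 := @hh_sub q 7 _ S0 [::2%N] [::6%N] [::2%N;6%N] [::] isT isT.
have c23 := @hh_sub q 7 _ S0 [::1%N;2%N;3%N;5%N] [::1%N;3%N;5%N;6%N] [::1%N;2%N;3%N;5%N;6%N] [::1%N;3%N;5%N] isT isT.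
have c24 := @hh_sub q 7 _ S0 [::1%N;3%N] [::1%N;5%N] [::1%N;3%N;5%N] [::1%N] isT isT.
have c25 := @hh_sub q 7 _ S0 [::0%N;1%N;2%N;3%N;4%N;6%N] [::0%N;1%N;2%N;4%N;5%N;6%N] [::0%N;1%N;2%N;3%N;4%N;5%N;6%N] [::0%N;1%N;2%N;4%N;6%N] isT isT.
have c26 := @hh_sub q 7 _ S0 [::0%N;2%N;4%N;6%N] [::0%N;2%N;5%N;6%N] [::0%N;2%N;4%N;5%N;6%N] [::0%N;2%N;6%N] isT isT.
have c27 := @hh_sub q 7 _ S0 [::1%N;2%N;3%N;4%N;6%N] [::1%N;2%N;3%N;5%N;6%N] [::1%N;2%N;3%N;4%N;5%N;6%N] [::1%N;2%N;3%N;6%N] isT isT.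
have c28 := @hh_sub q 7 _ S0 [::1%N;2%N;4%N] [::1%N;2%N;6%N] [::1%N;2%N;4%N;6%N] [::1%N;2%N] isT isT.
have c29 := @hh_sub q 7 _ S0 [::0%N;1%N;2%N;3%N;4%N] [::0%N;1%N;2%N;3%N;6%N] [::0%N;1%N;2%N;3%N;4%N;6%N] [::0%N;1%N;2%N;3%N] isT isT.
have c30 := @hh_fun q 7 _ f (@Ordinal 7 0 isT) [::1%N;4%N;5%N] [::0%N;1%N;4%N;5%N] S0 IG (chk_nb4_0) isT.
have c31 := @hh_fun q 7 _ f (@Ordinal 7 1 isT) [::0%N;2%N;6%N] [::0%N;1%N;2%N;6%N] S0 IG (chk_nb4_1) isT.
have c32 := @hh_fun q 7 _ f (@Ordinal 7 2 isT) [::1%N;3%N;5%N] [::1%N;2%N;3%N;5%N] S0 IG (chk_nb4_2) isT.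
have c33 := @hh_fun q 7 _ f (@Ordinal 7 3 isT) [::2%N;4%N;6%N] [::2%N;3%N;4%N;6%N] S0 IG (chk_nb4_3) isT.
have c34 := @hh_fun q 7 _ f (@Ordinal 7 4 isT) [::0%N;3%N] [::0%N;3%N;4%N] S0 IG (chk_nb4_4) isT.
have c35 := @hh_fun q 7 _ f (@Ordinal 7 5 isT) [::0%N;2%N;6%N] [::0%N;2%N;5%N;6%N] S0 IG (chk_nb4_5) isT.
have c36 := @hh_fun q 7 _ f (@Ordinal 7 6 isT) [::1%N;3%N;5%N] [::1%N;3%N;5%N;6%N] S0 IG (chk_nb4_6) isT.
have p1 := @hh_mono q 7 _ S0 [::] [::0%N] isT.
have p2 := @hh_mono q 7 _ S0 [::] [::1%N] isT.
have p4 := @hh_mono q 7 _ S0 [::] [::2%N] isT.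
have p6 := @hh_mono q 7 _ S0 [::] [::1%N;2%N] isT.
have p8 := @hh_mono q 7 _ S0 [::] [::3%N] isT.
have p9 := @hh_mono q 7 _ S0 [::] [::0%N;3%N] isT.
have p10 := @hh_mono q 7 _ S0 [::] [::1%N;3%N] isT.
have p13 := @hh_mono q 7 _ S0 [::] [::0%N;2%N;3%N] isT.
have p15 := @hh_mono q 7 _ S0 [::] [::0%N;1%N;2%N;3%N] isT.
have p16 := @hh_mono q 7 _ S0 [::] [::4%N] isT.
have p20 := @hh_mono q 7 _ S0 [::] [::2%N;4%N] isT.
have p22 := @hh_mono q 7 _ S0 [::] [::1%N;2%N;4%N] isT.
have p25 := @hh_mono q 7 _ S0 [::] [::0%N;3%N;4%N] isT.
have p29 := @hh_mono q 7 _ S0 [::] [::0%N;2%N;3%N;4%N] isT.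
have p31 := @hh_mono q 7 _ S0 [::] [::0%N;1%N;2%N;3%N;4%N] isT.
have p32 := @hh_mono q 7 _ S0 [::] [::5%N] isT.
have p34 := @hh_mono q 7 _ S0 [::] [::1%N;5%N] isT.
have p42 := @hh_mono q 7 _ S0 [::] [::1%N;3%N;5%N] isT.
have p46 := @hh_mono q 7 _ S0 [::] [::1%N;2%N;3%N;5%N] isT.
have p50 := @hh_mono q 7 _ S0 [::] [::1%N;4%N;5%N] isT.
have p51 := @hh_mono q 7 _ S0 [::] [::0%N;1%N;4%N;5%N] isT.
have p58 := @hh_mono q 7 _ S0 [::] [::1%N;3%N;4%N;5%N] isT.
have p59 := @hh_mono q 7 _ S0 [::] [::0%N;1%N;3%N;4%N;5%N] isT.
have p64 := @hh_mono q 7 _ S0 [::] [::6%N] isT.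
have p65 := @hh_mono q 7 _ S0 [::] [::0%N;6%N] isT.
have p68 := @hh_mono q 7 _ S0 [::] [::2%N;6%N] isT.
have p69 := @hh_mono q 7 _ S0 [::] [::0%N;2%N;6%N] isT.
have p70 := @hh_mono q 7 _ S0 [::] [::1%N;2%N;6%N] isT.
have p71 := @hh_mono q 7 _ S0 [::] [::0%N;1%N;2%N;6%N] isT.
have p78 := @hh_mono q 7 _ S0 [::] [::1%N;2%N;3%N;6%N] isT.
have p79 := @hh_mono q 7 _ S0 [::] [::0%N;1%N;2%N;3%N;6%N] isT.
have p84 := @hh_mono q 7 _ S0 [::] [::2%N;4%N;6%N] isT.
have p85 := @hh_mono q 7 _ S0 [::] [::0%N;2%N;4%N;6%N] isT.
have p86 := @hh_mono q 7 _ S0 [::] [::1%N;2%N;4%N;6%N] isT.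
have p87 := @hh_mono q 7 _ S0 [::] [::0%N;1%N;2%N;4%N;6%N] isT.
have p92 := @hh_mono q 7 _ S0 [::] [::2%N;3%N;4%N;6%N] isT.
have p94 := @hh_mono q 7 _ S0 [::] [::1%N;2%N;3%N;4%N;6%N] isT.
have p95 := @hh_mono q 7 _ S0 [::] [::0%N;1%N;2%N;3%N;4%N;6%N] isT.
have p101 := @hh_mono q 7 _ S0 [::] [::0%N;2%N;5%N;6%N] isT.
have p106 := @hh_mono q 7 _ S0 [::] [::1%N;3%N;5%N;6%N] isT.
have p110 := @hh_mono q 7 _ S0 [::] [::1%N;2%N;3%N;5%N;6%N] isT.
have p117 := @hh_mono q 7 _ S0 [::] [::0%N;2%N;4%N;5%N;6%N] isT.
have p119 := @hh_mono q 7 _ S0 [::] [::0%N;1%N;2%N;4%N;5%N;6%N] isT.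
have p122 := @hh_mono q 7 _ S0 [::] [::1%N;3%N;4%N;5%N;6%N] isT.
have p123 := @hh_mono q 7 _ S0 [::] [::0%N;1%N;3%N;4%N;5%N;6%N] isT.
have p126 := @hh_mono q 7 _ S0 [::] [::1%N;2%N;3%N;4%N;5%N;6%N] isT.
have p127 := @hh_mono q 7 _ S0 [::] [::0%N;1%N;2%N;3%N;4%N;5%N;6%N] isT.
lra.
Qed.

Lemma chk_nb6_0 : [forall u : 'I_7, G6 u (@Ordinal 7 0 isT) ==> (val u \in [::1%N;4%N;5%N])].
Proof. fin7. Qed.
Lemma chk_nb6_1 : [forall u : 'I_7, G6 u (@Ordinal 7 1 isT) ==> (val u \in [::0%N;2%N])].
Proof. fin7. Qed.
Lemma chk_nb6_2 : [forall u : 'I_7, G6 u (@Ordinal 7 2 isT) ==> (val u \in [::1%N;3%N;6%N])].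
Proof. fin7. Qed.
Lemma chk_nb6_3 : [forall u : 'I_7, G6 u (@Ordinal 7 3 isT) ==> (val u \in [::2%N;4%N])].
Proof. fin7. Qed.
Lemma chk_nb6_4 : [forall u : 'I_7, G6 u (@Ordinal 7 4 isT) ==> (val u \in [::0%N;3%N])].
Proof. fin7. Qed.
Lemma chk_nb6_5 : [forall u : 'I_7, G6 u (@Ordinal 7 5 isT) ==> (val u \in [::0%N;6%N])].
Proof. fin7. Qed.
Lemma chk_nb6_6 : [forall u : 'I_7, G6 u (@Ordinal 7 6 isT) ==> (val u \in [::2%N;5%N])].
Proof. fin7. Qed.

Lemma bound_G6 q (f : qmap q 7) : IG_sub G6 f -> (0 < #|Fix f|)%N ->
  ln (INR #|Fix f|) <= (7/2) * ln (INR q).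
Proof.
move=> IG S0.
have e0 := @hh_nil q 7 _ S0.
have eF := @hh_full q 7 (Fix f) [::0%N;1%N;2%N;3%N;4%N;5%N;6%N] isT.
have c1 := @hh_single q 7 _ S0 [::0%N] 0%N isT isT.
have c2 := @hh_single q 7 _ S0 [::1%N] 1%N isT isT.
have c3 := @hh_single q 7 _ S0 [::2%N] 2%N isT isT.
have c4 := @hh_single q 7 _ S0 [::3%N] 3%N isT isT.
have c5 := @hh_single q 7 _ S0 [::4%N] 4%N isT isT.
have c6 := @hh_single q 7 _ S0 [::5%N] 5%N isT isT.
have c7 := @hh_single q 7 _ S0 [::6%N] 6%N isT isT.
have c8 := @hh_sub q 7 _ S0 [::0%N;1%N;3%N;4%N;6%N] [::1%N;2%N;3%N;4%N;6%N] [::0%N;1%N;2%N;3%N;4%N;6%N] [::1%N;3%N;4%N;6%N] isT isT.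
have c9 := @hh_sub q 7 _ S0 [::0%N;3%N;4%N;5%N;6%N] [::2%N;3%N;4%N;5%N;6%N] [::0%N;2%N;3%N;4%N;5%N;6%N] [::3%N;4%N;5%N;6%N] isT isT.
have c10 := @hh_sub q 7 _ S0 [::0%N] [::3%N] [::0%N;3%N] [::] isT isT.
have c11 := @hh_sub q 7 _ S0 [::0%N;4%N;5%N;6%N] [::3%N;4%N;5%N;6%N] [::0%N;3%N;4%N;5%N;6%N] [::4%N;5%N;6%N] isT isT.
have c12 := @hh_sub q 7 _ S0 [::0%N;3%N;4%N] [::3%N;4%N;6%N] [::0%N;3%N;4%N;6%N] [::3%N;4%N] isT isT.
have c13 := @hh_sub q 7 _ S0 [::0%N;1%N;4%N;5%N] [::1%N;4%N;5%N;6%N] [::0%N;1%N;4%N;5%N;6%N] [::1%N;4%N;5%N] isT isT.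
have c14 := @hh_sub q 7 _ S0 [::0%N;1%N;2%N;5%N;6%N] [::0%N;2%N;3%N;5%N;6%N] [::0%N;1%N;2%N;3%N;5%N;6%N] [::0%N;2%N;5%N;6%N] isT isT.
have c15 := @hh_sub q 7 _ S0 [::0%N;1%N;4%N;5%N;6%N] [::0%N;3%N;4%N;5%N;6%N] [::0%N;1%N;3%N;4%N;5%N;6%N] [::0%N;4%N;5%N;6%N] isT isT.
have c16 := @hh_sub q 7 _ S0 [::1%N;5%N;6%N] [::4%N;5%N;6%N] [::1%N;4%N;5%N;6%N] [::5%N;6%N] isT isT.
have c17 := @hh_sub q 7 _ S0 [::0%N;1%N;2%N;3%N;5%N;6%N] [::0%N;2%N;3%N;4%N;5%N;6%N] [::0%N;1%N;2%N;3%N;4%N;5%N;6%N] [::0%N;2%N;3%N;5%N;6%N] isT isT.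
have c18 := @hh_sub q 7 _ S0 [::1%N;6%N] [::5%N;6%N] [::1%N;5%N;6%N] [::6%N] isT isT.
have c19 := @hh_sub q 7 _ S0 [::0%N;1%N;2%N] [::0%N;2%N;5%N] [::0%N;1%N;2%N;5%N] [::0%N;2%N] isT isT.
have c20 := @hh_sub q 7 _ S0 [::1%N] [::6%N] [::1%N;6%N] [::] isT isT.
have c21 := @hh_sub q 7 _ S0 [::0%N;1%N;2%N;5%N] [::0%N;2%N;5%N;6%N] [::0%N;1%N;2%N;5%N;6%N] [::0%N;2%N;5%N] isT isT.
have c22 := @hh_sub q 7 _ S0 [::2%N;5%N;6%N] [::4%N;5%N;6%N] [::2%N;4%N;5%N;6%N] [::5%N;6%N] isT isT.
have c23 := @hh_sub q 7 _ S0 [::1%N;2%N;3%N;6%N] [::1%N;3%N;4%N;6%N] [::1%N;2%N;3%N;4%N;6%N] [::1%N;3%N;6%N] isT isT.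
have c24 := @hh_sub q 7 _ S0 [::2%N] [::5%N] [::2%N;5%N] [::] isT isT.
have c25 := @hh_sub q 7 _ S0 [::0%N;1%N;2%N;3%N;4%N;6%N] [::0%N;1%N;3%N;4%N;5%N;6%N] [::0%N;1%N;2%N;3%N;4%N;5%N;6%N] [::0%N;1%N;3%N;4%N;6%N] isT isT.
have c26 := @hh_sub q 7 _ S0 [::0%N;3%N;4%N;6%N] [::0%N;4%N;5%N;6%N] [::0%N;3%N;4%N;5%N;6%N] [::0%N;4%N;6%N] isT isT.
have c27 := @hh_sub q 7 _ S0 [::2%N;3%N;4%N;6%N] [::2%N;4%N;5%N;6%N] [::2%N;3%N;4%N;5%N;6%N] [::2%N;4%N;6%N] isT isT.
have c28 := @hh_sub q 7 _ S0 [::3%N;4%N] [::4%N;6%N] [::3%N;4%N;6%N] [::4%N] isT isT.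
have c29 := @hh_sub q 7 _ S0 [::2%N;3%N;4%N] [::2%N;4%N;6%N] [::2%N;3%N;4%N;6%N] [::2%N;4%N] isT isT.
have c30 := @hh_sub q 7 _ S0 [::4%N;6%N] [::5%N;6%N] [::4%N;5%N;6%N] [::6%N] isT isT.
have c31 := @hh_sub q 7 _ S0 [::0%N;4%N;6%N] [::0%N;5%N;6%N] [::0%N;4%N;5%N;6%N] [::0%N;6%N] isT isT.
have c32 := @hh_sub q 7 _ S0 [::4%N] [::6%N] [::4%N;6%N] [::] isT isT.
have c33 := @hh_fun q 7 _ f (@Ordinal 7 0 isT) [::1%N;4%N;5%N] [::0%N;1%N;4%N;5%N] S0 IG (chk_nb6_0) isT.
have c34 := @hh_fun q 7 _ f (@Ordinal 7 1 isT) [::0%N;2%N] [::0%N;1%N;2%N] S0 IG (chk_nb6_1) isT.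
have c35 := @hh_fun q 7 _ f (@Ordinal 7 2 isT) [::1%N;3%N;6%N] [::1%N;2%N;3%N;6%N] S0 IG (chk_nb6_2) isT.
have c36 := @hh_fun q 7 _ f (@Ordinal 7 3 isT) [::2%N;4%N] [::2%N;3%N;4%N] S0 IG (chk_nb6_3) isT.
have c37 := @hh_fun q 7 _ f (@Ordinal 7 4 isT) [::0%N;3%N] [::0%N;3%N;4%N] S0 IG (chk_nb6_4) isT.
have c38 := @hh_fun q 7 _ f (@Ordinal 7 5 isT) [::0%N;6%N] [::0%N;5%N;6%N] S0 IG (chk_nb6_5) isT.
have c39 := @hh_fun q 7 _ f (@Ordinal 7 6 isT) [::2%N;5%N] [::2%N;5%N;6%N] S0 IG (chk_nb6_6) isT.
have p1 := @hh_mono q 7 _ S0 [::] [::0%N] isT.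
have p2 := @hh_mono q 7 _ S0 [::] [::1%N] isT.
have p4 := @hh_mono q 7 _ S0 [::] [::2%N] isT.
have p5 := @hh_mono q 7 _ S0 [::] [::0%N;2%N] isT.
have p7 := @hh_mono q 7 _ S0 [::] [::0%N;1%N;2%N] isT.
have p8 := @hh_mono q 7 _ S0 [::] [::3%N] isT.
have p9 := @hh_mono q 7 _ S0 [::] [::0%N;3%N] isT.
have p16 := @hh_mono q 7 _ S0 [::] [::4%N] isT.
have p20 := @hh_mono q 7 _ S0 [::] [::2%N;4%N] isT.
have p24 := @hh_mono q 7 _ S0 [::] [::3%N;4%N] isT.
have p25 := @hh_mono q 7 _ S0 [::] [::0%N;3%N;4%N] isT.
have p28 := @hh_mono q 7 _ S0 [::] [::2%N;3%N;4%N] isT.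
have p32 := @hh_mono q 7 _ S0 [::] [::5%N] isT.
have p36 := @hh_mono q 7 _ S0 [::] [::2%N;5%N] isT.
have p37 := @hh_mono q 7 _ S0 [::] [::0%N;2%N;5%N] isT.
have p39 := @hh_mono q 7 _ S0 [::] [::0%N;1%N;2%N;5%N] isT.
have p50 := @hh_mono q 7 _ S0 [::] [::1%N;4%N;5%N] isT.
have p51 := @hh_mono q 7 _ S0 [::] [::0%N;1%N;4%N;5%N] isT.
have p64 := @hh_mono q 7 _ S0 [::] [::6%N] isT.
have p65 := @hh_mono q 7 _ S0 [::] [::0%N;6%N] isT.
have p66 := @hh_mono q 7 _ S0 [::] [::1%N;6%N] isT.
have p74 := @hh_mono q 7 _ S0 [::] [::1%N;3%N;6%N] isT.
have p78 := @hh_mono q 7 _ S0 [::] [::1%N;2%N;3%N;6%N] isT.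
have p80 := @hh_mono q 7 _ S0 [::] [::4%N;6%N] isT.
have p81 := @hh_mono q 7 _ S0 [::] [::0%N;4%N;6%N] isT.
have p84 := @hh_mono q 7 _ S0 [::] [::2%N;4%N;6%N] isT.
have p88 := @hh_mono q 7 _ S0 [::] [::3%N;4%N;6%N] isT.
have p89 := @hh_mono q 7 _ S0 [::] [::0%N;3%N;4%N;6%N] isT.
have p90 := @hh_mono q 7 _ S0 [::] [::1%N;3%N;4%N;6%N] isT.
have p91 := @hh_mono q 7 _ S0 [::] [::0%N;1%N;3%N;4%N;6%N] isT.
have p92 := @hh_mono q 7 _ S0 [::] [::2%N;3%N;4%N;6%N] isT.
have p94 := @hh_mono q 7 _ S0 [::] [::1%N;2%N;3%N;4%N;6%N] isT.
have p95 := @hh_mono q 7 _ S0 [::] [::0%N;1%N;2%N;3%N;4%N;6%N] isT.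
have p96 := @hh_mono q 7 _ S0 [::] [::5%N;6%N] isT.
have p97 := @hh_mono q 7 _ S0 [::] [::0%N;5%N;6%N] isT.
have p98 := @hh_mono q 7 _ S0 [::] [::1%N;5%N;6%N] isT.
have p100 := @hh_mono q 7 _ S0 [::] [::2%N;5%N;6%N] isT.
have p101 := @hh_mono q 7 _ S0 [::] [::0%N;2%N;5%N;6%N] isT.
have p103 := @hh_mono q 7 _ S0 [::] [::0%N;1%N;2%N;5%N;6%N] isT.
have p109 := @hh_mono q 7 _ S0 [::] [::0%N;2%N;3%N;5%N;6%N] isT.
have p111 := @hh_mono q 7 _ S0 [::] [::0%N;1%N;2%N;3%N;5%N;6%N] isT.
have p112 := @hh_mono q 7 _ S0 [::] [::4%N;5%N;6%N] isT.
have p113 := @hh_mono q 7 _ S0 [::] [::0%N;4%N;5%N;6%N] isT.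
have p114 := @hh_mono q 7 _ S0 [::] [::1%N;4%N;5%N;6%N] isT.
have p115 := @hh_mono q 7 _ S0 [::] [::0%N;1%N;4%N;5%N;6%N] isT.
have p116 := @hh_mono q 7 _ S0 [::] [::2%N;4%N;5%N;6%N] isT.
have p120 := @hh_mono q 7 _ S0 [::] [::3%N;4%N;5%N;6%N] isT.
have p121 := @hh_mono q 7 _ S0 [::] [::0%N;3%N;4%N;5%N;6%N] isT.
have p123 := @hh_mono q 7 _ S0 [::] [::0%N;1%N;3%N;4%N;5%N;6%N] isT.
have p124 := @hh_mono q 7 _ S0 [::] [::2%N;3%N;4%N;5%N;6%N] isT.
have p125 := @hh_mono q 7 _ S0 [::] [::0%N;2%N;3%N;4%N;5%N;6%N] isT.
have p127 := @hh_mono q 7 _ S0 [::] [::0%N;1%N;2%N;3%N;4%N;5%N;6%N] isT.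
lra.
Qed.


Close Scope R_scope.

Definition mkO q (k : nat) : 'I_q.+1 := @Ordinal q.+1 (k %% q.+1) (ltn_pmod k (ltn0Sn q)).
Definition allO n := [seq mkO n j | j <- iota 0 n.+1].
Lemma mem_allO n (v : 'I_n.+1) : v \in allO n.
Proof.
apply/mapP; exists (val v); first by rewrite mem_iota /= ltn_ord.
by apply: val_inj; rewrite /= modn_small.
Qed.

Fixpoint allbits (m : nat) : seq (seq bool) :=
  if m is m'.+1 then [seq false :: s | s <- allbits m'] ++ [seq true :: s | s <- allbits m']
  else [:: [::]].
Lemma size_allbits m : size (allbits m) = (2 ^ m)%N.
Proof. elim: m => [//|m IH] /=; by rewrite size_cat !size_map IH expnS mul2n addnn. Qed.
Lemma uniq_allbits m : uniq (allbits m).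
Proof.
elim: m => [//|m IH] /=; rewrite cat_uniq.
have i1 : injective (cons false) by move=> x y [].
have i2 : injective (cons true) by move=> x y [].
rewrite (map_inj_uniq i1) (map_inj_uniq i2) IH /= andbT.
apply/hasPn=> x /mapP[s _ ->]; apply/negP=> /mapP[t _]; discriminate.
Qed.

Section C.
Variables (q n' : nat).
Local Notation n := n'.+1.
Variables (nb : 'I_n -> seq 'I_n) (loc : 'I_n -> seq 'I_q -> 'I_q).
Definition Fc (x : config q n) : config q n := [ffun v => loc v [seq x w | w <- nb v]].
Definition fc : qmap q n := [ffun x => Fc x].

Lemma IG_c (G : rel 'I_n) : (forall v, all (fun u => G u v) (nb v)) -> IG_sub G fc.
Proof.
move=> H; apply/forallP=> u; apply/forallP=> v; apply/implyP=> /existsP[a /existsP[b /andP[/forallP Hab Hne]]].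
case uin: (u \in nb v); first exact: (allP (H v)) u uin.
move: Hne; rewrite !ffunE.
suff -> : [seq a w | w <- nb v] = [seq b w | w <- nb v] by rewrite eqxx.
apply/eq_in_map => w win; apply/eqP; apply: (implyP (Hab w)).
by apply: contraTneq win => ->; rewrite uin.
Qed.

Lemma Fix_c (M : nat) (gp : nat -> 'I_n -> 'I_q) (ws : seq 'I_n) (hq : seq 'I_q -> nat) :
  all (fun k => all (fun v => loc v [seq gp k w | w <- nb v] == gp k v) (allO n')
                && (hq [seq gp k w | w <- ws] == k)) (iota 0 M) ->
  (M <= #|Fix fc|)%N.
Proof.
move/allP=> H.
pose gg (p : 'I_M) : config q n := [ffun v => gp (val p) v].
have Hp (p : 'I_M) : all (fun v => loc v [seq gp (val p) w | w <- nb v] == gp (val p) v) (allO n') && (hq [seq gp (val p) w | w <- ws] == val p).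
  by apply: H; rewrite mem_iota /=; exact: ltn_ord.
have mapg (p : 'I_M) (l : seq 'I_n) : [seq gg p w | w <- l] = [seq gp (val p) w | w <- l].
  by apply: eq_map => w; rewrite ffunE.
have inj : injective gg.
  move=> p1 p2 e; apply: val_inj.
  have := eqP (andP (Hp p1)).2; have := eqP (andP (Hp p2)).2.
  by rewrite -!mapg e => -> ->.
rewrite -{1}(card_ord M) -(card_imset _ inj).
apply: subset_leq_card; apply/subsetP=> x /imsetP[p _ ->].
rewrite inE ffunE; apply/eqP/ffunP=> v; rewrite !ffunE mapg.
by apply/eqP; apply: (allP (andP (Hp p)).1); exact: mem_allO.
Qed.
Lemma Fix_c2 (m : nat) (gp : seq bool -> 'I_n -> 'I_q) (ws : seq 'I_n) (hq : seq 'I_q -> seq bool) :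
  all (fun bs => all (fun v => loc v [seq gp bs w | w <- nb v] == gp bs v) (allO n')
                && (hq [seq gp bs w | w <- ws] == bs)) (allbits m) ->
  (2 ^ m <= #|Fix fc|)%N.
Proof.
move/allP=> H.
pose gg (bs : seq bool) : config q n := [ffun v => gp bs v].
have mapg bs (l : seq 'I_n) : [seq gg bs w | w <- l] = [seq gp bs w | w <- l].
  by apply: eq_map => w; rewrite ffunE.
have inj : {in allbits m &, injective gg}.
  move=> b1 b2 h1 h2 e.
  have := eqP (andP (H _ h1)).2; have := eqP (andP (H _ h2)).2.
  by rewrite -!mapg e => -> ->.
rewrite -size_allbits -(size_map gg) -(card_uniqP _); last first.
  by rewrite map_inj_in_uniq // uniq_allbits.
apply: subset_leq_card; apply/subsetP=> x /mapP[bs bsin ->].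
rewrite inE ffunE; apply/eqP/ffunP=> v; rewrite !ffunE mapg.
by apply/eqP; apply: (allP (andP (H _ bsin)).1); exact: mem_allO.
Qed.
End C.

Definition bitv q (y : 'I_q) (k : nat) : bool := odd (val y %/ 2 ^ k).
Definition mkv q (bs : seq bool) : 'I_q.+1 := mkO q (foldr (fun (b : bool) acc => b + 2 * acc) 0 bs).

Definition o7 (k : nat) : 'I_7 := mkO 6 k.
Definition nbB (v : 'I_7) : seq 'I_7 :=
  match val v with
  | 0 => [:: o7 1; o7 4] | 1 => [:: o7 2; o7 0] | 2 => [:: o7 3; o7 1]
  | 3 => [:: o7 4; o7 2] | 4 => [:: o7 0; o7 3] | 5 => [:: o7 6] | _ => [:: o7 5] end.
Definition locB (v : 'I_7) (l : seq 'I_4) : 'I_4 :=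
  if (val v < 5)%N then @mkv 3 [:: bitv (nth ord0 l 0) 1; bitv (nth ord0 l 1) 0]
  else nth ord0 l 0.
Definition gB (k : seq bool) (v : 'I_7) : 'I_4 :=
  let e i := nth false k i in
  match val v with
   | 0 => @mkv 3 [:: e 0; e 4] | 1 => @mkv 3 [:: e 1; e 0] | 2 => @mkv 3 [:: e 2; e 1]
   | 3 => @mkv 3 [:: e 3; e 2] | 4 => @mkv 3 [:: e 4; e 3]
   | _ => @mkv 3 [:: e 5; e 6] end.
Definition wsB := [:: o7 0; o7 1; o7 2; o7 3; o7 4; o7 5].
Definition hB (l : seq 'I_4) : seq bool :=
  [:: bitv (nth ord0 l 0) 0; bitv (nth ord0 l 1) 0; bitv (nth ord0 l 2) 0;
      bitv (nth ord0 l 3) 0; bitv (nth ord0 l 4) 0; bitv (nth ord0 l 5) 0; bitv (nth ord0 l 5) 1].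

Lemma chkB : all (fun k => all (fun v => locB v [seq gB k w | w <- nbB v] == gB k v) (allO 6)
                && (hB [seq gB k w | w <- wsB] == k)) (allbits 7).
Proof. vm_compute. reflexivity. Qed.

Lemma B_lower : (2 ^ 7 <= #|Fix (fc nbB locB)|)%N.
Proof. exact: Fix_c2 chkB. Qed.

Ltac allv7 := case=> [[|[|[|[|[|[|[|k]]]]]]] Hk] //; vm_compute; reflexivity.
Lemma IG_B2 : IG_sub G2 (fc nbB locB). Proof. apply: IG_c; allv7. Qed.
Lemma IG_B3 : IG_sub G3 (fc nbB locB). Proof. apply: IG_c; allv7. Qed.
Lemma IG_B4 : IG_sub G4 (fc nbB locB). Proof. apply: IG_c; allv7. Qed.
Lemma IG_B5 : IG_sub G5 (fc nbB locB). Proof. apply: IG_c; allv7. Qed.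
Lemma IG_B6 : IG_sub G6 (fc nbB locB). Proof. apply: IG_c; allv7. Qed.


Definition nb1 (v : 'I_7) : seq 'I_7 :=
  match val v with
  | 0 => [:: o7 1; o7 5; o7 4] | 1 => [:: o7 0; o7 5; o7 2] | 2 => [:: o7 1; o7 3]
  | 3 => [:: o7 2; o7 4; o7 6] | 4 => [:: o7 3; o7 0] | 5 => [:: o7 0; o7 1; o7 6]
  | _ => [:: o7 5; o7 3] end.
Definition loc1 (v : 'I_7) (l : seq 'I_8) : 'I_8 :=
  let b i j := bitv (nth ord0 l i) j in
  match val v with
  | 0 => @mkv 7 [:: b 0 0 (+) b 1 0; b 2 1; b 2 2]
  | 1 => @mkv 7 [:: b 0 0 (+) b 1 0; b 2 0; b 2 1]
  | 2 => @mkv 7 [:: b 0 1; b 0 2; b 1 0]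
  | 3 => @mkv 7 [:: b 0 2; b 1 0; b 2 2]
  | 4 => @mkv 7 [:: b 0 1; b 1 1; b 1 2]
  | 5 => @mkv 7 [:: b 0 0 (+) b 1 0; b 2 0; b 2 1]
  | _ => @mkv 7 [:: b 0 1; b 0 2; b 1 2] end.
Definition g1 (k : seq bool) (v : 'I_7) : 'I_8 :=
  let e i := nth false k i in
  match val v with
  | 0 => @mkv 7 [:: e 0; e 2; e 3]
  | 1 => @mkv 7 [:: e 1; e 4; e 5]
  | 2 => @mkv 7 [:: e 4; e 5; e 8]
  | 3 => @mkv 7 [:: e 8; e 9; e 10]
  | 4 => @mkv 7 [:: e 9; e 2; e 3]
  | 5 => @mkv 7 [:: e 0 (+) e 1; e 6; e 7]
  | _ => @mkv 7 [:: e 6; e 7; e 10] end.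
Definition ws1 := [:: o7 0; o7 1; o7 5; o7 3].
Definition h1 (l : seq 'I_8) : seq bool :=
  let b i j := bitv (nth ord0 l i) j in
  [:: b 0 0; b 1 0; b 0 1; b 0 2; b 1 1; b 1 2; b 2 1; b 2 2; b 3 0; b 3 1; b 3 2].

Lemma chk1 : all (fun k => all (fun v => loc1 v [seq g1 k w | w <- nb1 v] == g1 k v) (allO 6)
                && (h1 [seq g1 k w | w <- ws1] == k)) (allbits 11).
Proof. vm_compute. reflexivity. Qed.

Lemma G1_lower : (2 ^ 11 <= #|Fix (fc nb1 loc1)|)%N.
Proof. exact: Fix_c2 chk1. Qed.
Lemma IG_1 : IG_sub G1 (fc nb1 loc1). Proof. apply: IG_c; allv7. Qed.

Open Scope R_scope.

Lemma ln0 : ln 0 = 0.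
Proof. unfold ln; destruct (Rlt_dec 0 0) as [h|h]; [exfalso; exact: (Rlt_irrefl 0 h) | reflexivity]. Qed.

Lemma gn_le (G : rel 'I_7) q c : 0 <= c -> (2 <= q)%N ->
  (forall f : qmap q 7, IG_sub G f -> (0 < #|Fix f|)%N -> ln (INR #|Fix f|) <= c * ln (INR q)) ->
  gn G q <= c.
Proof.
move=> c0 q2 H; rewrite /gn.
have lq : 0 < ln (INR q).
  rewrite -ln_1; apply: ln_increasing; first lra.
  apply: (Rlt_le_trans _ (INR 2)); first by simpl; lra.
  by apply: le_INR; apply/leP.
apply: (big_ind (fun x => x <= c)) => //.
  by move=> x y hx hy; apply: Rmax_lub.
move=> f IG; case: (posnP #|Fix f|) => [->|pos].
  by rewrite /= ln0 /Rdiv Rmult_0_l.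
have := H f IG pos => h.
apply: (Rmult_le_reg_r (ln (INR q))) => //.
rewrite /Rdiv Rmult_assoc Rinv_l; lra.
Qed.

Lemma bigRmax_ge (I : eqType) (r : seq I) (P : pred I) (F : I -> R) x :
  x \in r -> P x -> F x <= \big[Rmax/R0]_(i <- r | P i) F i.
Proof.
elim: r => [//|y r IH]; rewrite inE big_cons => /orP[/eqP <-|xr] Px.
  by rewrite Px; apply: Rmax_l.
have := IH xr Px; case: (P y) => // h; apply: Rle_trans h _; apply: Rmax_r.
Qed.

Lemma gn_ge (G : rel 'I_7) q (f : qmap q 7) : IG_sub G f ->
  ln (INR #|Fix f|) / ln (INR q) <= gn G q.
Proof.
move=> IG; rewrite /gn.
have := @bigRmax_ge (qmap q 7) (index_enum (qmap q 7)) (fun f => IG_sub G f)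
  (fun f => Rdiv (ln (INR #|Fix f|)) (ln (INR q))) f (mem_index_enum f) IG.
by [].
Qed.

Lemma IG_sub_mono (G G' : rel 'I_7) q (f : qmap q 7) :
  (forall u v, G u v -> G' u v) -> IG_sub G f -> IG_sub G' f.
Proof.
move=> H /forallP IG; apply/forallP=> u; apply/forallP=> v; apply/implyP=> d.
apply: H; exact: (implyP (forallP (IG u) v) d).
Qed.

Ltac allv7' := case=> [[|[|[|[|[|[|[|k]]]]]]] Hk] //.
Lemma sub24 u v : G2 u v -> G4 u v.
Proof. move: u v; case=> [[|[|[|[|[|[|[|k]]]]]]] Hk] //; case=> [[|[|[|[|[|[|[|k']]]]]]] Hk'] //; vm_compute; by []. Qed.
Lemma sub34 u v : G3 u v -> G4 u v.
Proof. move: u v; case=> [[|[|[|[|[|[|[|k]]]]]]] Hk] //; case=> [[|[|[|[|[|[|[|k']]]]]]] Hk'] //; vm_compute; by []. Qed.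
Lemma sub54 u v : G5 u v -> G4 u v.
Proof. move: u v; case=> [[|[|[|[|[|[|[|k]]]]]]] Hk] //; case=> [[|[|[|[|[|[|[|k']]]]]]] Hk'] //; vm_compute; by []. Qed.

Lemma ln_pow2 k : ln (INR (2 ^ k)) = INR k * ln 2.
Proof.
rewrite -ln_pow; last lra.
congr ln; elim: k => [//|k IH]; rewrite expnS mult_INR IH /=; lra.
Qed.

Lemma entropy_of (G : rel 'I_7) c q0 (f0 : qmap q0 7) k a :
  (2 <= q0)%N -> q0 = (2 ^ a)%N -> (0 < a)%N -> c = INR k / INR a ->
  IG_sub G f0 -> (2 ^ k <= #|Fix f0|)%N ->
  (forall q (f : qmap q 7), IG_sub G f -> (0 < #|Fix f|)%N -> ln (INR #|Fix f|) <= c * ln (INR q)) ->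
  entropy_is G c.
Proof.
move=> q02 eq0 a0 ec IG0 fix0 B.
have c0 : 0 <= c.
  rewrite ec; apply: Rmult_le_pos; first exact: pos_INR.
  by apply: Rlt_le; apply: Rinv_0_lt_compat; apply: INR_pos.
have low : c <= gn G q0.
  have GG := gn_ge IG0. apply: Rle_trans; last exact: GG.
  have la : 0 < INR a * ln 2.
    apply: Rmult_lt_0_compat; first exact: INR_pos.
    rewrite -ln_1; apply: ln_increasing; lra.
  have -> : ln (INR q0) = INR a * ln 2 by rewrite eq0 ln_pow2.
  rewrite ec.
  apply: (Rmult_le_reg_r (INR a * ln 2)) => //.
  rewrite /Rdiv !Rmult_assoc Rinv_l; last lra.
  have -> : / INR a * (INR a * ln 2) = ln 2.
    rewrite -Rmult_assoc Rinv_l ?Rmult_1_l //; have := INR_pos a0; lra.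
  rewrite Rmult_1_r -ln_pow2; apply: ln_le'.
    apply: INR_pos; by rewrite expn_gt0.
  by apply: le_INR; apply/leP.
split.
  move=> r [q [q2 ->]]; apply: gn_le => // f IG pos; exact: B.
move=> b ub; apply: Rle_trans low _; apply: ub; by exists q0.
Qed.

Lemma r113 : 11 / 3 = INR 11 / INR 3.
Proof. rewrite !INR_IZR_INZ /=; reflexivity. Qed.
Lemma r72 : 7 / 2 = INR 7 / INR 2.
Proof. rewrite !INR_IZR_INZ /=; reflexivity. Qed.

Theorem mainTheorem5 :
  entropy_is G1 (11 / 3) /\
  entropy_is G2 (7 / 2) /\ entropy_is G3 (7 / 2) /\
  entropy_is G4 (7 / 2) /\ entropy_is G5 (7 / 2) /\
  entropy_is G6 (7 / 2).
Proof.
split.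
  apply: (@entropy_of G1 (11/3) 8 (fc nb1 loc1) 11 3) => //.
  - exact: r113.
  - exact: IG_1.
  - exact: G1_lower.
  - move=> q f IG pos; exact: bound_G1 IG pos.
split.
  apply: (@entropy_of G2 (7/2) 4 (fc nbB locB) 7 2) => //.
  - exact: r72.
  - exact: IG_B2.
  - exact: B_lower.
  - move=> q f IG pos; exact: bound_G4 (IG_sub_mono sub24 IG) pos.
split.
  apply: (@entropy_of G3 (7/2) 4 (fc nbB locB) 7 2) => //.
  - exact: r72.
  - exact: IG_B3.
  - exact: B_lower.
  - move=> q f IG pos; exact: bound_G4 (IG_sub_mono sub34 IG) pos.
split.
  apply: (@entropy_of G4 (7/2) 4 (fc nbB locB) 7 2) => //.
  - exact: r72.
  - exact: IG_B4.
  - exact: B_lower.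
  - move=> q f IG pos; exact: bound_G4 IG pos.
split.
  apply: (@entropy_of G5 (7/2) 4 (fc nbB locB) 7 2) => //.
  - exact: r72.
  - exact: IG_B5.
  - exact: B_lower.
  - move=> q f IG pos; exact: bound_G4 (IG_sub_mono sub54 IG) pos.
apply: (@entropy_of G6 (7/2) 4 (fc nbB locB) 7 2) => //.
- exact: r72.
- exact: IG_B6.
- exact: B_lower.
- move=> q f IG pos; exact: bound_G6 IG pos.
Qed.
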